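(* Let $A$ be an AUF algebra and let $\psi\in\mathrm{SLF}(A)$ be non-degenerate. Let $M\in\mathrm{Coh}_{\mathrm L}(A)$ be projective as a left $A$-module, and let $B=\mathrm{End}_{A,-}(M)^{\mathrm{op}}$. Then the right pseudotrace ${}^\psi\mathrm{Tr}\in\mathrm{SLF}(B)$ associated to $\psi$ and the $A$-$B$ bimodule $M$ is non-degenerate.
   Context: All algebras are associative $\mathbb C$-algebras, not necessarily unital. An idempotent is $e$ with $e^2=e$. An algebra $A$ is AUF if there is a family $(e_i)_{i\in\mathfrak I}$ of mutually orthogonal idempotents with $\dim e_iAe_j<\infty$ and $A=\sum_{i,j}e_iAe_j$. A left $A$-module $M$ is quasicoherent if $\xi\in A\xi$ for all $\xi\in M$, coherent if moreover finitely generated; $\mathrm{Coh}_{\mathrm L}(A)$ is the category of coherent left $A$-modules. $B=\mathrm{End}_{A,-}(M)^{\mathrm{op}}$ acts on $M$ on the right by $\xi\cdot T=T(\xi)$. $\mathrm{SLF}(C)$ is the space of linear $\phi:C\to\mathbb C$ with $\phi(xy)=\phi(yx)$; $\phi$ is non-degenerate if $\{x\in C:\phi(xy)=0\ \forall y\in C\}=0$. Right pseudotrace: choose an idempotent $e\in A$ and finitely many left $A$-module maps $\beta_j:Ae\to M$, $\check\beta^j:M\to Ae$ with $\sum_j\beta_j\circ\check\beta^j=\mathrm{id}_M$ (these exist since $M$ is coherent and projective); then ${}^\psi\mathrm{Tr}(y)=\sum_j\psi(\check\beta^j(\beta_j(e)y))$ for $y\in B$, independent of choices. *)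

(* Defs.v *)
From HB Require Import structures.
From mathcomp Require Import all_boot all_order all_algebra.
From mathcomp Require Import complex.
From mathcomp Require Import Rstruct.

Set Implicit Arguments.
Unset Strict Implicit.
Unset Printing Implicit Defensive.

Import GRing.Theory Num.Theory.
Local Open Scope ring_scope.

Definition CC : fieldType := (Rdefinitions.R)[i].

Record nuAlgebra := NuAlgebra {
  nua_sort :> lmodType CC;
  nua_mul : nua_sort -> nua_sort -> nua_sort;
  nua_mulA : forall a b c, nua_mul a (nua_mul b c) = nua_mul (nua_mul a b) c;
  nua_linl : forall (k : CC) a b c,
      nua_mul (k *: a + b) c = k *: nua_mul a c + nua_mul b c;
  nua_linr : forall (k : CC) a b c,
      nua_mul a (k *: b + c) = k *: nua_mul a b + nua_mul a c
}.

Notation "a ** b" := (nua_mul a b) (at level 40, left associativity).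

Definition AUF (A : nuAlgebra) : Prop :=
  exists (I : Type) (e : I -> A),
    (forall i, e i ** e i = e i) /\
    (forall i j, i <> j -> e i ** e j = 0) /\
    (* dim e_i A e_j < oo *)
    (forall i j, exists (n : nat) (v : 'I_n -> A),
        forall a, exists c : 'I_n -> CC, e i ** a ** e j = \sum_(k < n) c k *: v k) /\
    (forall a : A, exists r : seq (I * I * A),
        a = \sum_(t <- r) (e t.1.1 ** t.2 ** e t.1.2)).

Definition SLF (A : nuAlgebra) (phi : A -> CC) : Prop :=
  (forall (k : CC) x y, phi (k *: x + y) = k * phi x + phi y) /\
  (forall x y, phi (x ** y) = phi (y ** x)).

Definition nondegenerate_SLF (A : nuAlgebra) (phi : A -> CC) : Prop :=
  forall x : A, (forall y : A, phi (x ** y) = 0) -> x = 0.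

Record lmodule (A : nuAlgebra) := LModule {
  lm_sort :> lmodType CC;
  lm_act : A -> lm_sort -> lm_sort;
  lm_actA : forall a b m, lm_act (a ** b) m = lm_act a (lm_act b m);
  lm_linl : forall (k : CC) a b m,
      lm_act (k *: a + b) m = k *: lm_act a m + lm_act b m;
  lm_linr : forall (k : CC) a m n,
      lm_act a (k *: m + n) = k *: lm_act a m + lm_act a n
}.

Arguments lm_act {A} M a m : rename.
Notation act := (lm_act _).

Definition is_hom (A : nuAlgebra) (M N : lmodule A) (f : M -> N) : Prop :=
  (forall (k : CC) x y, f (k *: x + y) = k *: f x + f y) /\
  (forall (a : A) x, f (act a x) = act a (f x)).

Definition quasicoherent (A : nuAlgebra) (M : lmodule A) : Prop :=
  forall xi : M, exists a : A, act a (xi) = xi.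

Definition fin_generated (A : nuAlgebra) (M : lmodule A) : Prop :=
  exists (n : nat) (xi : 'I_n -> M), forall m : M,
    exists (c : 'I_n -> CC) (a : 'I_n -> A),
      m = \sum_(i < n) ((c i *: xi i) + (act (a i) (xi i))).

Definition coherent (A : nuAlgebra) (M : lmodule A) : Prop :=
  quasicoherent M /\ fin_generated M.

Definition projective (A : nuAlgebra) (M : lmodule A) : Prop :=
  forall (N N' : lmodule A) (p : N -> N') (f : M -> N'),
    is_hom p -> is_hom f -> (forall n' : N', exists n : N, p n = n') ->
    exists g : M -> N, is_hom g /\ forall m, p (g m) = f m.

(* A map Ae -> M is represented by a function A -> M whose values
   outside Ae are irrelevant; a map M -> Ae by a function M -> A with
   values in Ae. *)
Definition in_Ae (A : nuAlgebra) (e x : A) : Prop := exists a : A, x = a ** e.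

Definition hom_from_Ae (A : nuAlgebra) (M : lmodule A) (e : A) (f : A -> M) : Prop :=
  (forall (k : CC) x y, in_Ae e x -> in_Ae e y -> f (k *: x + y) = k *: f x + f y) /\
  (forall (a x : A), in_Ae e x -> f (a ** x) = act a (f x)).

Definition hom_to_Ae (A : nuAlgebra) (M : lmodule A) (e : A) (g : M -> A) : Prop :=
  (forall m, in_Ae e (g m)) /\
  (forall (k : CC) x y, g (k *: x + y) = k *: g x + g y) /\
  (forall (a : A) x, g (act a x) = a ** g x).

(* B = End_{A,-}(M)^op : elements are A-module endomorphisms of M, the
   product of B is x *_B y = y o x (so that  xi . (x y) = (xi . x) . y
   with xi . T = T xi). *)
Definition End_A (A : nuAlgebra) (M : lmodule A) (T : M -> M) : Prop := is_hom T.

Definition mulB (A : nuAlgebra) (M : lmodule A) (x y : M -> M) : M -> M :=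
  fun m => y (x m).

Definition right_pseudotrace (A : nuAlgebra) (M : lmodule A) (psi : A -> CC)
    (e : A) (n : nat) (beta : 'I_n -> A -> M) (cbeta : 'I_n -> M -> A)
    (y : M -> M) : CC :=
  \sum_(j < n) psi (cbeta j (y (beta j e))).

Definition pseudotrace_data (A : nuAlgebra) (M : lmodule A) (e : A) (n : nat)
    (beta : 'I_n -> A -> M) (cbeta : 'I_n -> M -> A) : Prop :=
  e ** e = e /\
  (forall j, hom_from_Ae e (beta j)) /\
  (forall j, hom_to_Ae e (cbeta j)) /\
  (forall m : M, \sum_(j < n) beta j (cbeta j m) = m).

Definition nondegenerate_B (A : nuAlgebra) (M : lmodule A) (phi : (M -> M) -> CC) : Prop :=
  forall x : M -> M, End_A x ->
    (forall y : M -> M, End_A y -> phi (mulB x y) = 0) ->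
    forall m : M, x m = 0.

(* Main.v *)
Require Import Defs.
From mathcomp Require Import all_boot all_algebra.
Import GRing.Theory.
Local Open Scope ring_scope.

Lemma lin_add (U V : lmodType CC) (f : U -> V) :
  (forall (k : CC) x y, f (k *: x + y) = k *: f x + f y) ->
  forall x y, f (x + y) = f x + f y.
Proof. by move=> H x y; have := H 1 x y; rewrite !scale1r. Qed.

Lemma lin_0 (U V : lmodType CC) (f : U -> V) :
  (forall (k : CC) x y, f (k *: x + y) = k *: f x + f y) -> f 0 = 0.
Proof.
move=> H; have := H 1 0 0; rewrite !scale1r addr0.
by move/(congr1 (fun z => z - f 0)); rewrite addrK subrr => <-.
Qed.

Lemma lin_sum (U V : lmodType CC) (f : U -> V) n (F : 'I_n -> U) :
  (forall (k : CC) x y, f (k *: x + y) = k *: f x + f y) ->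
  f (\sum_(j < n) F j) = \sum_(j < n) f (F j).
Proof. by move=> H; rewrite (big_morph f (@lin_add _ _ f H) (@lin_0 _ _ f H)). Qed.

Lemma psi_add (A : nuAlgebra) (psi : A -> CC) :
  (forall (k : CC) x y, psi (k *: x + y) = k * psi x + psi y) ->
  forall x y, psi (x + y) = psi x + psi y.
Proof. by move=> H x y; have := H 1 x y; rewrite scale1r mul1r. Qed.

Lemma psi_0 (A : nuAlgebra) (psi : A -> CC) :
  (forall (k : CC) x y, psi (k *: x + y) = k * psi x + psi y) -> psi 0 = 0.
Proof.
move=> H; have := H 1 0 0; rewrite !scale1r addr0 mul1r.
by move/(congr1 (fun z => z - psi 0)); rewrite addrK subrr => <-.
Qed.

Lemma psi_sum (A : nuAlgebra) (psi : A -> CC) n (F : 'I_n -> A) :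
  (forall (k : CC) x y, psi (k *: x + y) = k * psi x + psi y) ->
  psi (\sum_(j < n) F j) = \sum_(j < n) psi (F j).
Proof. by move=> H; rewrite (big_morph psi (@psi_add _ psi H) (@psi_0 _ psi H)). Qed.

Arguments lin_sum {U V f n F}.
Arguments psi_sum {A psi n F}.
Arguments lin_0 {U V f}.

Theorem proposition10p3 (A : nuAlgebra) (psi : A -> CC) (M : lmodule A)
    (e : A) (n : nat) (beta : 'I_n -> A -> M) (cbeta : 'I_n -> M -> A) :
  AUF A -> SLF psi -> nondegenerate_SLF psi ->
  coherent M -> projective M ->
  pseudotrace_data e beta cbeta ->
  nondegenerate_B (right_pseudotrace psi e beta cbeta).
Proof.
move=> _ [psiL psiS] psiND _ _ [ee [Hb [Hc Hsum]]] x [xL xA] Hx.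
have eAe : in_Ae e e by exists e.
have cbe : forall l m, cbeta l m ** e = cbeta l m.
  move=> l m; have [c ->] := (Hc l).1 m.
  by rewrite -nua_mulA ee.
have bc : forall l m, beta l (cbeta l m) = act (cbeta l m) (beta l e).
  by move=> l m; rewrite -{1}cbe; apply: (Hb l).2.
have key : forall k eta, psi (cbeta k (x eta)) = 0.
  move=> k eta.
  pose y := fun m : M => act (cbeta k m) eta.
  have yE : End_A y.
    split.
      by move=> c m1 m2; rewrite /y (Hc k).2.1 lm_linl.
    by move=> a m; rewrite /y (Hc k).2.2 lm_actA.
  have := Hx y yE; rewrite /right_pseudotrace /mulB /y.
  move=> <-.
  rewrite -{1}(Hsum eta) (lin_sum xL) (lin_sum (Hc k).2.1) (psi_sum psiL).
  apply: eq_bigr => l _.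
  rewrite (Hc l).2.2 psiS -(Hc k).2.2 -xA.
  by rewrite bc.
have xb : forall j, x (beta j e) = 0.
  move=> j; rewrite -(Hsum (x (beta j e))); apply: big1 => k _.
  suff -> : cbeta k (x (beta j e)) = 0.
    have z0 : (0 : A) = 0 ** e.
      have := nua_linl 1 0 0 e; rewrite !scale1r addr0.
      by move/(congr1 (fun z => z - 0 ** e)); rewrite addrK subrr => <-.
    have i0 : in_Ae e 0 by exists 0.
    have := (Hb k).1 1 0 0 i0 i0; rewrite !scale1r addr0.
    by move/(congr1 (fun z => z - beta k 0)); rewrite addrK subrr => <-.
  by apply: psiND => b; rewrite psiS -(Hc k).2.2 -xA key.
move=> m; rewrite -(Hsum m) (lin_sum xL); apply: big1 => j _.
rewrite bc xA xb.
have := @lm_linr A M 1 (cbeta j m) 0 0.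
rewrite !scale1r addr0.
by move/(congr1 (fun z => z - act (cbeta j m) 0)); rewrite addrK subrr => <-.
Qed.
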